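(* Let $p(t)=1+\sum_{j=1}^K c_jt^j$ be a real polynomial with each $c_j\ge 0$, and suppose at least $k$ of the $c_j$ are positive. Let $m\ge 0$ be an integer and $F(t)=(1+t)^m$. Then $N(Fp)\ge m+1+k$.
   Context: $N(q)$ denotes the number of distinct monomials with nonzero coefficient in the polynomial $q$. *)

(* Defs.v *)
From mathcomp Require Import all_boot all_order all_algebra.
Set Implicit Arguments. Unset Strict Implicit. Unset Printing Implicit Defensive.
Import GRing.Theory Num.Theory.
Local Open Scope ring_scope.

Definition nmonomials (R : nzRingType) (q : {poly R}) : nat :=
  count (fun c : R => c != 0) (polyseq q).

(* Main.v *)
Require Import Defs.
From mathcomp Require Import all_boot all_order all_algebra.
Import GRing.Theory Num.Theory.
Local Open Scope ring_scope.

Lemma nmon_count (R : nzRingType) (q : {poly R}) n :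
  (size q <= n)%N ->
  nmonomials q = count (fun i => q`_i != 0) (iota 0 n).
Proof.
move=> hn; rewrite /nmonomials -{1}(mkseq_nth 0 q) /mkseq count_map.
rewrite -(subnKC hn) iotaD count_cat.
rewrite (@eq_in_count _ _ pred0 (iota (0 + size q) _)); last first.
  by move=> i; rewrite mem_iota add0n => /andP[hi _] /=; rewrite nth_default ?eqxx.
by rewrite count_pred0 addn0.
Qed.

Lemma step (R : realFieldType) (q : {poly R}) :
  (forall j, 0 <= q`_j) -> q != 0 ->
  (forall j, 0 <= ((1 + 'X) * q)`_j) /\
  ((nmonomials q).+1 <= nmonomials ((1 + 'X) * q))%N.
Proof.
move=> hq q0.
have cr j : ((1 + 'X) * q)`_j = q`_j + (if j == 0%N then 0 else q`_j.-1).
  by rewrite mulrDl mul1r coefD coefXM.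
split.
  by move=> j; rewrite cr; case: (j == 0%N); rewrite ?addr0 // addr_ge0.
have sq : (0 < size q)%N by rewrite size_poly_gt0.
rewrite (@nmon_count _ _ _ (leqnn (size q))) (@nmon_count _ _ (size q).+1); last first.
  apply/leq_sizeP => j hj; rewrite cr !nth_default //; last by apply: ltnW.
  case: (j == 0%N); rewrite ?addr0 //; rewrite nth_default //.
  by rewrite -ltnS prednK // (leq_trans sq) // ltnW.
rewrite -[(size q).+1]addn1 iotaD count_cat add0n /= addn0 -addn1 leq_add //.
  apply: sub_count => i /= hi; rewrite cr.
  have := hq i; rewrite le0r (negbTE hi) /= => hpos.
  apply: lt0r_neq0; apply: ltr_wpDr => //.
  by case: (i == 0%N) => //; apply: hq.
rewrite cr nth_default // add0r.
have -> : (size q == 0%N) = false by apply/negbTE; rewrite -lt0n.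
have := lead_coef_eq0 q; rewrite lead_coefE (negbTE q0) => ->.
by [].
Qed.

Theorem proposition2p4 (R : realFieldType) (p : {poly R}) (k m : nat) :
  p`_0 = 1 ->
  (forall j : nat, 0 <= p`_j) ->
  (k <= count (fun j : nat => (0 < p`_j)%R) (iota 1%N (size p).-1))%N ->
  (m.+1 + k <= nmonomials ((1 + 'X) ^+ m * p))%N.
Proof.
move=> p0 hp hk.
suff: (forall j, 0 <= ((1 + 'X) ^+ m * p)`_j) /\
      (m.+1 + k <= nmonomials ((1 + 'X) ^+ m * p))%N by case.
elim: m => [|m [IHc IHn]].
  rewrite expr0 mul1r; split => //.
  have sp : (0 < size p)%N.
    rewrite size_poly_gt0; apply/eqP => p00.
    by move: p0; rewrite p00 coef0 => /eqP; rewrite eq_sym oner_eq0.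
  rewrite (@nmon_count _ _ _ (leqnn (size p))) -(prednK sp) /= p0 oner_neq0 add1n ltnS.
  apply: (leq_trans hk); apply: sub_count => i /= /lt0r_neq0 //.
have q0 : (1 + 'X) ^+ m * p != 0.
  apply/eqP => h; move: IHn; rewrite h /nmonomials polyseq0 /=.
  by rewrite addSn ltn0.
have [hc hn] := @step _ _ IHc q0.
by rewrite exprS -mulrA; split => //; rewrite addSn (leq_trans _ hn).
Qed.
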